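(* Let $r\ge 1$ and $g\ge 3$ be integers and let $n[1,r;g]$ denote the order of a $[1,r;g]$-mixed cage. Then $$n[1,r;g]\ \ge\ \begin{cases} 2\left(1+\sum_{i=1}^{(g-3)/2} n_0(r,2i+1)\right)+n_0(r,g) & \text{if } g \text{ is odd},\\[1mm] 2\left(1+\sum_{i=1}^{(g-2)/2} n_0(r,2i+1)\right) & \text{if } g \text{ is even},\end{cases}$$ where $n_0(r,g)=1+r+r(r-1)+\cdots+r(r-1)^{(g-3)/2}$ for odd $g$ and $n_0(r,g)=2\left(1+(r-1)+\cdots+(r-1)^{g/2-1}\right)$ for even $g$.
   Context: A mixed graph is a finite graph that may contain both edges and arcs. A $[z,r;g]$-mixed graph is a mixed graph in which every vertex is the tail of exactly $z$ arcs, the head of exactly $z$ arcs, and is incident with exactly $r$ edges, and whose girth is $g$. Walks traverse edges in either direction and arcs only in their direction; a cycle is a closed walk with no repeated vertices (other than start = end) and no repeated edge or arc; the girth is the length of a shortest cycle. A $[z,r;g]$-mixed cage is a $[z,r;g]$-mixed graph of minimum order. *)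

(* Defs.v *)
From mathcomp Require Import all_boot.
Set Implicit Arguments. Unset Strict Implicit. Unset Printing Implicit Defensive.

(* A (simple) mixed graph on a finite vertex type T is given by
   - E : rel T, the edge relation (symmetric: E u v means {u,v} is an edge),
   - A : rel T, the arc relation (A u v means there is an arc u -> v). *)

Definition step_ok (T : finType) (E A : rel T) (st : bool * T * T) : bool :=
  let: (b, u, v) := st in if b then A u v else E u v.

Definition same_link (T : finType) (s1 s2 : bool * T * T) : bool :=
  let: (b1, u1, v1) := s1 in
  let: (b2, u2, v2) := s2 in
  (b1 == b2) &&
  (if b1 then (u1 == u2) && (v1 == v2)
   else ((u1 == u2) && (v1 == v2)) || ((u1 == v2) && (v1 == u2))).

Definition cyc_steps (T : finType) (c : seq T) (bs : seq bool) (x0 : T)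
  : seq (bool * T * T) :=
  [seq (nth false bs i, nth x0 c i, nth x0 c ((i + 1) %% size c))
  | i <- iota 0 (size c)].

Definition has_cycle_of_length (T : finType) (E A : rel T) (k : nat) : Prop :=
  exists (x : T) (c' : seq T) (bs : seq bool),
    let c := x :: c' in
    [/\ size c = k, size bs = k, uniq c,
        all (step_ok E A) (cyc_steps c bs x) &
        forall i j, i < k -> j < k -> i != j ->
          ~~ same_link (nth (false, x, x) (cyc_steps c bs x) i)
                       (nth (false, x, x) (cyc_steps c bs x) j)].

Definition girth_is (T : finType) (E A : rel T) (g : nat) : Prop :=
  has_cycle_of_length E A g /\
  forall k, k < g -> ~ has_cycle_of_length E A k.

Definition is_mixed_graph (z r g : nat) (T : finType) (E A : rel T) : Prop :=
  [/\ symmetric E, irreflexive E /\ irreflexive A,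
      (forall u : T, #|[set v | A u v]| = z /\ #|[set v | A v u]| = z),
      (forall u : T, #|[set v | E u v]| = r) &
      girth_is E A g].

Definition is_mixed_cage (z r g : nat) (T : finType) (E A : rel T) : Prop :=
  is_mixed_graph z r g E A /\
  forall (T' : finType) (E' A' : rel T'), is_mixed_graph z r g E' A' -> #|T| <= #|T'|.

Definition n0 (r g : nat) : nat :=
  if odd g then 1 + r * \sum_(0 <= j < ((g - 3)./2).+1) (r - 1) ^ j
  else 2 * \sum_(0 <= j < g./2) (r - 1) ^ j.

Definition mixed_bound (r g : nat) : nat :=
  if odd g then 2 * (1 + \sum_(1 <= i < ((g - 3)./2).+1) n0 r (2 * i + 1)) + n0 r g
  else 2 * (1 + \sum_(1 <= i < ((g - 2)./2).+1) n0 r (2 * i + 1)).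

(* Main.v *)
Require Import Defs.
From mathcomp Require Import all_boot zify.
Set Implicit Arguments. Unset Strict Implicit. Unset Printing Implicit Defensive.


Lemma sum_sym_odd (G : nat -> nat) m :
  \sum_(0 <= p < (2 * m).+1) G (minn p (2 * m - p)) = 2 * \sum_(0 <= i < m) G i + G m.
Proof.
rewrite (@big_cat_nat _ _ _ m.+1) //=; last lia.
rewrite (@eq_big_nat _ _ _ 0 m.+1 _ G); last by move=> p /andP[_ hp]; congr G; lia.
rewrite big_nat_recr //=.
rewrite (big_addn 0 _ m.+1).
have -> : (2 * m).+1 - m.+1 = m by lia.
rewrite [X in _ + X = _]big_nat_rev /= [X in _ + X = _](@eq_big_nat _ _ _ 0 m _ G); last first.
  by move=> i /andP[_ hi]; congr G; lia.
lia.
Qed.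

Lemma sum_sym_even (G : nat -> nat) m :
  \sum_(0 <= p < (2 * m).+2) G (minn p ((2 * m).+1 - p)) = 2 * \sum_(0 <= i < m.+1) G i.
Proof.
rewrite (@big_cat_nat _ _ _ m.+1) //=; last lia.
rewrite (@eq_big_nat _ _ _ 0 m.+1 _ G); last by move=> p /andP[_ hp]; congr G; lia.
rewrite (big_addn 0 _ m.+1).
have -> : (2 * m).+2 - m.+1 = m.+1 by lia.
rewrite [X in _ + X = _]big_nat_rev /= [X in _ + X = _](@eq_big_nat _ _ _ 0 m.+1 _ G); last first.
  by move=> i /andP[_ hi]; congr G; lia.
lia.
Qed.

Definition GG r k := 1 + r * \sum_(0 <= j < k) (r - 1) ^ j.

Lemma n0_odd r i : 0 < i -> n0 r (2 * i + 1) = GG r i.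
Proof.
move=> i0.
rewrite /n0 addn1 /= oddM andFb /=.
case: i i0 => [|i] // _.
have -> : (2 * i.+1).+1 - 3 = 2 * i by lia.
by rewrite mul2n doubleK.
Qed.

Lemma bound_eq r g : 3 <= g ->
  \sum_(0 <= p < g.-1.+1) GG r (minn p (g.-1 - p)) = mixed_bound r g.
Proof.
move=> hg; rewrite /mixed_bound.
case: (boolP (odd g)) => og.
  have [m gm] : exists m, g = 2 * m + 1 by exists g./2; rewrite mul2n -[g in g = _]odd_double_half og addn1 add1n.
  have m1 : 1 <= m by lia.
  have -> : g.-1 = 2 * m by lia.
  rewrite sum_sym_odd.
  have -> : ((g - 3)./2).+1 = m.
    rewrite gm (_ : 2 * m + 1 - 3 = 2 * m.-1) ?mul2n ?doubleK; lia.
  rewrite gm n0_odd // (@eq_big_nat _ _ _ 1 m _ (GG r)); last by move=> i /andP[i1 _]; rewrite n0_odd.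
  have G0 : GG r 0 = 1 by rewrite /GG big_geq // muln0.
  by rewrite big_ltn // G0.
have [m gm] : exists m, g = 2 * m + 2.
  exists (g./2).-1; have := odd_double_half g; rewrite (negbTE og) add0n -mul2n; lia.
have -> : g.-1 = (2 * m).+1 by lia.
rewrite sum_sym_even.
have -> : ((g - 2)./2).+1 = m.+1.
  by rewrite gm (_ : 2 * m + 2 - 2 = 2 * m) ?mul2n ?doubleK //; lia.
rewrite (@eq_big_nat _ _ _ 1 m.+1 _ (GG r)); last by move=> i /andP[i1 _]; rewrite n0_odd.
have G0 : GG r 0 = 1 by rewrite /GG big_geq // muln0.
by rewrite big_ltn // G0.
Qed.


Section Cyc.
Variables (T : finType) (E A : rel T).

Lemma walk_cycle (f : nat -> T) (tb : nat -> bool) (L : nat) :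
  0 < L -> f L = f 0 ->
  (forall i, i < L -> step_ok E A (tb i, f i, f i.+1)) ->
  (forall i, i.+1 < L -> ~~ tb i -> ~~ tb i.+1 -> f i != f i.+2) ->
  exists2 k, 0 < k <= L & has_cycle_of_length E A k.
Proof.
move=> L0 fL hstep hred.
pose P d := (0 < d) && has (fun a => (a + d <= L) && (f a == f (a + d))) (iota 0 L.+1).
have exP : exists d, P d.
  exists L; rewrite /P L0; apply/hasP; exists 0.
    by rewrite mem_iota.
  by rewrite add0n leqnn fL eqxx.
case: (ex_minnP exP) => d /andP[d0 /hasP[a _ /andP[adL /eqP fa]]] dmin.
pose g s := f (a + s).
have eqg : forall s s', s < s' <= d -> g s = g s' -> s = 0 /\ s' = d.
  move=> s s' /andP[ss' s'd] gs.
  have : d <= s' - s.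
    apply: dmin; rewrite /P subn_gt0 ss'; apply/hasP; exists (a + s).
      rewrite mem_iota; lia.
    apply/andP; split; first lia.
    rewrite /g in gs; rewrite gs; apply/eqP; congr f; lia.
  lia.
have eqg2 : forall s s', s <= d -> s' <= d -> g s = g s' ->
    [\/ s = s', s = 0 /\ s' = d | s = d /\ s' = 0].
  move=> s s' sd s'd gs.
  case: (ltngtP s s') => h.
  - by have [] := eqg s s' (ltac:(apply/andP; split => //)) gs; constructor 2.
  - by have [] := eqg s' s (ltac:(apply/andP; split => //)) (esym gs); constructor 3.
  - by constructor 1.
have gd : g d = g 0 by rewrite /g addn0.
have gS : forall s, f (a + s).+1 = g s.+1 by move=> s; rewrite /g addnS.
exists d; first by rewrite d0 (leq_trans _ adL) // leq_addl.
pose c := [seq g i | i <- iota 0 d].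
pose bs := [seq tb (a + i) | i <- iota 0 d].
have cE : g 0 :: [seq g i | i <- iota 1 d.-1] = c.
  by rewrite /c; case: (d) d0.
have nthc : forall i, i < d -> nth (g 0) c i = g i.
  by move=> i id; rewrite /c (nth_map 0) ?size_iota // nth_iota.
have stE : cyc_steps c bs (g 0) = [seq (tb (a + i), g i, g i.+1) | i <- iota 0 d].
  rewrite /cyc_steps /c size_map size_iota; apply/eq_in_map => i.
  rewrite mem_iota add0n => /= id.
  rewrite /bs (nth_map 0) ?size_iota // nth_iota // add0n.
  rewrite nthc //; congr (_, _, _).
  case: (ltngtP i.+1 d) => h.
  - by rewrite addn1 modn_small // nthc.
  - lia.
  - by rewrite addn1 h modnn nthc // -h gd.
exists (g 0), [seq g i | i <- iota 1 d.-1], bs.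
rewrite cE; split.
- by rewrite size_map size_iota.
- by rewrite size_map size_iota.
- rewrite map_inj_in_uniq ?iota_uniq // => i j; rewrite !mem_iota !add0n => /= id jd gij.
  have [|[]|[]] := eqg2 i j (ltnW id) (ltnW jd) gij; lia.
- rewrite stE all_map; apply/allP => i; rewrite mem_iota add0n => /= id.
  rewrite /= -gS; apply: hstep; lia.
- move=> i j id jd ij; rewrite stE (nth_map 0) ?size_iota // (nth_map 0) ?size_iota //.
  rewrite !nth_iota // !add0n /same_link.
  case tbi: (tb (a + i)); case tbj: (tb (a + j)) => //=.
  + apply/negP => /andP[/eqP gij _].
    have [|[]|[]] := eqg2 i j (ltnW id) (ltnW jd) gij; lia.
  + apply/negP => /orP[/andP[/eqP gij _]|/andP[/eqP h1 /eqP h2]].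
      have [|[]|[]] := eqg2 i j (ltnW id) (ltnW jd) gij; lia.
    have [e1|[e1 e2]|[e1 e2]] := eqg2 i j.+1 (ltnW id) jd h1;
    have [e3|[e3 e4]|[e3 e4]] := eqg2 i.+1 j id (ltnW jd) h2; try lia.
    all: have ta : tb a = false.
    all: try (rewrite -tbj; congr tb; lia); try (rewrite -tbi; congr tb; lia).
    all: have ta1 : tb a.+1 = false.
    all: try (rewrite -tbj; congr tb; lia); try (rewrite -tbi; congr tb; lia).
    all: have fa2 : f a.+2 = f a by have := gd; rewrite /g addn0 => <-; congr f; lia.
    all: have hlt : a.+1 < L by lia.
    all: by move: (hred a hlt); rewrite ta ta1 fa2 eqxx => /(_ isT isT).
Qed.
End Cyc.


Section NB.
Variables (T : eqType).

Fixpoint nb (s : seq T) : bool :=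
  match s with
  | a :: ((b :: c :: _) as t) => (a != c) && nb t
  | _ => true
  end.

Lemma nbP x0 s : reflect (forall i, i.+2 < size s -> nth x0 s i != nth x0 s i.+2) (nb s).
Proof.
elim: s => [|a [|b [|c t]] IH]; try by constructor.
apply: (iffP idP).
- move=> /andP[ac /IH h] [|i] hi //=; exact: h.
- move=> h; apply/andP; split; first exact: (h 0).
  by apply/IH => i hi; exact: (h i.+1).
Qed.

Lemma nb_rev s : nb (rev s) = nb s.
Proof.
case: s => [|x0 s']; first by [].
set s := x0 :: s'.
apply/(nbP x0)/(nbP x0); rewrite size_rev => h i hi.
- have hh : (size s - i.+3).+2 < size s. clearbody s. lia.
  have := h _ hh.
  rewrite !nth_rev; try lia.
  have -> : size s - (size s - i.+3).+1 = i.+2 by lia.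
  have -> : size s - (size s - i.+3).+3 = i by lia.
  by rewrite eq_sym.
- rewrite !nth_rev; try lia.
  have := h (size s - i.+3) ltac:(lia).
  have -> : (size s - i.+3).+2 = size s - i.+1 by lia.
  by rewrite eq_sym.
Qed.

Lemma nb_prefix s1 s2 : nb (s1 ++ s2) -> nb s1.
Proof.
case: s1 => [|x0 s1']; first by [].
move=> /(nbP x0) h; apply/(nbP x0) => i hi.
have := h i ltac:(rewrite size_cat; lia).
by rewrite !nth_cat hi ltnW // ltnW.
Qed.

Lemma nb_behead s : nb s -> nb (behead s).
Proof. by case: s => [|a [|b [|c t]]] //= /andP[]. Qed.

Lemma nb_join s1 y s2 : nb (rcons s1 y) -> nb (y :: s2) ->
  (0 < size s1 -> 0 < size s2 -> last y s1 != head y s2) ->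
  nb (rcons s1 y ++ s2).
Proof.
move=> /(nbP y) h1 /(nbP y) h2 hj; apply/(nbP y) => i.
rewrite cat_rcons size_cat /= => hi.
set n := size s1.
have A1 : forall k, k <= n -> nth y (s1 ++ y :: s2) k = nth y (rcons s1 y) k.
  move=> k kn; rewrite -cats1 !nth_cat; case: ltnP => // kn'.
  have -> : k = n by lia.
  by rewrite subnn.
have A2 : forall k, n <= k -> nth y (s1 ++ y :: s2) k = nth y (y :: s2) (k - n).
  by move=> k kn; rewrite nth_cat ltnNge kn.
case: (leqP i.+2 n) => c1.
  rewrite !A1 ?(ltnW c1) ?(ltnW (ltnW c1)) //; apply: h1; rewrite size_rcons; lia.
case: (leqP n i) => c2.
  rewrite !A2 //; try lia.
  have -> : i.+2 - n = (i - n).+2 by lia.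
  apply: h2 => /=; lia.
have ei : i = n.-1 by lia.
rewrite A1 ?A2; try lia.
have -> : i.+2 - n = 1 by lia.
rewrite /= -cats1 nth_cat ltnNge; have -> /= : n <= i = false by lia.
destruct s2 as [|b s2']; first (simpl in hi; lia).
rewrite ei nth_last; apply: hj => /=; lia.
Qed.

End NB.
Lemma map_cst (X Y : Type) (c : Y) (s : seq X) : [seq c | _ <- s] = nseq (size s) c.
Proof. by elim: s => //= x s ->. Qed.

Section NBW.
Variables (T : finType) (E : rel T).

Fixpoint nbw (k : nat) (prev : option T) (v : T) : seq (seq T) :=
  if k is k'.+1 then
    [::] :: [seq w :: s | w <- enum [pred w | E v w && (Some w != prev)],
                          s <- nbw k' (Some v) w]
  else [:: [::]].

Definition pre (prev : option T) (v : T) (s : seq T) :=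
  if prev is Some u then u :: v :: s else v :: s.

Lemma nbw_prop k prev v s : s \in nbw k prev v ->
  [/\ size s <= k, path E v s & nb (pre prev v s)].
Proof.
elim: k prev v s => [|k IH] prev v s /=.
  by rewrite inE => /eqP ->; case: prev.
rewrite inE => /orP[/eqP ->|]; first by case: prev.
move=> /allpairsPdep [w [s0 [wP s0P ->]]].
have [h1 h2 h3] := IH _ _ _ s0P.
move: wP; rewrite mem_enum inE => /andP[Evw hw].
split => //=; first by rewrite Evw.
case: prev hw => [u|] hw; first (apply/andP; split; last exact: h3).
  by apply/negP => /eqP uw; move: hw; rewrite uw eqxx.
exact: h3.
Qed.

Lemma nbw_uniq k prev v : uniq (nbw k prev v).
Proof.
elim: k prev v => [|k IH] prev v //=.
apply/andP; split.
  by apply/negP => /allpairsPdep [w [s0 [_ _ ]]].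
apply: allpairs_uniq_dep; first exact: enum_uniq.
  by move=> w _; apply: IH.
by move=> [x1 y1] [x2 y2] _ _ /= [-> ->].
Qed.

Variable r : nat.
Hypothesis Esym : symmetric E.
Hypothesis Ereg : forall u, #|[set v | E u v]| = r.

Lemma nbw_size_some k u v : E v u ->
  size (nbw k (Some u) v) = \sum_(0 <= j < k.+1) (r - 1) ^ j.
Proof.
elim: k u v => [|k IH] u v Evu /=; first by rewrite big_nat1.
rewrite size_allpairs_dep.
have -> : [seq size (nbw k (Some v) w) | w <- enum [pred w | E v w && (Some w != Some u)]]
    = nseq (size (enum [pred w | E v w && (Some w != Some u)])) (\sum_(0 <= j < k.+1) (r - 1) ^ j).
  rewrite -map_cst; apply/eq_in_map => w; rewrite mem_enum inE => /andP[Evw _].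
  by apply: IH; rewrite Esym.
rewrite sumn_nseq -cardE.
have -> : #|[pred w | E v w && (Some w != Some u)]| = r - 1.
  rewrite -(Ereg v) (cardD1 u [set w | E v w]) inE Evu add1n subSS subn0.
  by apply: eq_card => w; rewrite !inE andbC.
rewrite [RHS]big_nat_recl // expn0 add1n; congr S.
rewrite mulnC big_distrr /=; apply: eq_bigr => j _; by rewrite expnS.
Qed.

Lemma nbw_size_none k v :
  size (nbw k None v) = 1 + r * \sum_(0 <= j < k) (r - 1) ^ j.
Proof.
case: k => [|k] /=; first by rewrite big_geq // muln0.
rewrite size_allpairs_dep.
have -> : [seq size (nbw k (Some v) w) | w <- enum [pred w | E v w && (Some w != None)]]
    = nseq (size (enum [pred w | E v w && (Some w != None)])) (\sum_(0 <= j < k.+1) (r - 1) ^ j).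
  rewrite -map_cst; apply/eq_in_map => w; rewrite mem_enum inE => /andP[Evw _].
  by apply: nbw_size_some; rewrite Esym.
rewrite sumn_nseq -cardE.
have -> : #|[pred w | E v w && (Some w != None)]| = r.
  rewrite -(Ereg v); apply: eq_card => w; by rewrite !inE andbT.
by rewrite mulnC.
Qed.

End NBW.
Lemma last_rev_belast (T : Type) (z : T) w : last (last z w) (rev (belast z w)) = z.
Proof. by case: w => [|a w] //=; rewrite rev_cons last_rcons. Qed.

Section Main.
Variables (T : finType) (E A : rel T) (g : nat) (x0 : T).
Hypothesis Esym : symmetric E.
Definition out (u : T) := odflt u [pick v | A u v].
Hypothesis hA1 : forall u, A u (out u).
Hypothesis hg : 3 <= g.
Hypothesis Hgirth : forall k, k < g -> ~ has_cycle_of_length E A k.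

Definition xx (i : nat) := iter i out x0.
Definition N := g.-1.
Definition ok p w := [&& size w <= minn p (N - p), path E (xx p) w & nb (xx p :: w)].

Lemma construct p q w w' : p <= q -> q <= N -> ok p w -> ok q w' ->
  last (xx p) w = last (xx q) w' -> ~~ ((p == q) && (w == w')) ->
  (0 < size (belast (xx q) w') -> 0 < size (rev (belast (xx p) w)) ->
     last (last (xx q) w') (belast (xx q) w') != head (last (xx q) w') (rev (belast (xx p) w))) ->
  False.
Proof.
move=> pq qN /and3P[sw pw nw] /and3P[sw' pw' nw'] ey neq hj.
set U := (xx q :: w') ++ rev (belast (xx p) w).
set V := [seq xx i | i <- iota p (q - p)] ++ U.
set L := (q - p) + size w' + size w.
have sU : size U = (size w' + size w).+1 by rewrite /U size_cat size_rev size_belast.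
have sV : size V = L.+1 by rewrite /V size_cat size_map size_iota sU /L; lia.
have fA : forall i, i <= q - p -> nth x0 V i = xx (p + i).
  move=> i iq; rewrite /V nth_cat size_map size_iota.
  case: ltnP => h; first by rewrite (nth_map 0) ?size_iota // nth_iota.
  have -> : i = q - p by lia.
  by rewrite subnn /U /=; congr xx; lia.
have fU : forall i, q - p <= i -> nth x0 V i = nth x0 U (i - (q - p)).
  by move=> i iq; rewrite /V nth_cat size_map size_iota ltnNge iq.
have pU : path E (xx q) (w' ++ rev (belast (xx p) w)).
  rewrite cat_path pw' /= -ey rev_path.
  by rewrite (@eq_path _ _ E) // => a b; rewrite Esym.
have nU : nb U.
  rewrite /U lastI; apply: nb_join => //.
    by rewrite -lastI.
  by rewrite -ey -rev_rcons -lastI nb_rev.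
have L0 : 0 < L.
  rewrite lt0n; apply/negP => /eqP L0.
  have w0 : w = [::] by apply/nilP; apply/eqP; rewrite /L in L0; lia.
  have w0' : w' = [::] by apply/nilP; apply/eqP; rewrite /L in L0; lia.
  have epq : p = q by rewrite /L in L0; lia.
  by move: neq; rewrite w0 w0' epq !eqxx.
have LN : L <= N by rewrite /L; lia.
have H1 : nth x0 V L = nth x0 V 0.
  rewrite (fA 0) // addn0 -[L]/(L.+1.-1) -sV nth_last last_cat /U /= last_cat -ey.
  by rewrite last_rev_belast.
have H2 : forall i, i < L -> step_ok E A ((i < q - p), nth x0 V i, nth x0 V i.+1).
  move=> i iL; case: (ltnP i (q - p)) => h.
    by rewrite /step_ok (fA i) ?(ltnW h) // (fA i.+1) // addnS; apply: hA1.
  rewrite /step_ok /= (fU i) // (fU i.+1) ?(leqW h) // subSn //.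
  move/(pathP x0): pU => pU'; apply: pU'; rewrite size_cat size_rev size_belast /L in iL *; lia.
have H3 : forall i, i.+1 < L -> ~~ (i < q - p) -> ~~ (i.+1 < q - p) -> nth x0 V i != nth x0 V i.+2.
  move=> i iL tbi _; rewrite -leqNgt in tbi.
  rewrite (fU i) // (fU i.+2) ?(leqW (leqW tbi)) // !subSn ?(leqW tbi) //.
  by move/(nbP x0): nU; apply; rewrite sU /L in iL *; lia.
have [k /andP[k0 kL] hk] := @walk_cycle T E A (nth x0 V) (fun i => i < q - p) L L0 H1 H2 H3.
apply: (Hgirth _ hk); rewrite /N in LN; lia.
Qed.

Lemma ok_rcons p w a : ok p (rcons w a) -> ok p w.
Proof.
move=> /and3P[sw pw nw]; apply/and3P; split.
- by rewrite size_rcons in sw; lia.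
- by rewrite rcons_path in pw; case/andP: pw.
- by rewrite -cats1 -cat_cons in nw; apply: nb_prefix nw.
Qed.

Lemma head_rev_cons (X : Type) (d x : X) s : head d (rev (x :: s)) = last x s.
Proof. by rewrite lastI rev_rcons. Qed.

Lemma inj_main n p q w w' : size w + size w' <= n -> p <= q -> q <= N ->
  ok p w -> ok q w' -> last (xx p) w = last (xx q) w' -> p = q /\ w = w'.
Proof.
elim: n p q w w' => [|n IH] p q w w' hs pq qN okw okw' ey;
  (case: (boolP ((p == q) && (w == w'))) => [/andP[/eqP -> /eqP ->] // | neq]);
  exfalso; move: okw ey hs neq; case/lastP: w => [|w0 a] okw ey hs neq;
  move: okw' ey hs neq; case/lastP: w' => [|w0' a'] okw' ey hs neq;
  try (apply: (construct pq qN okw okw' ey neq); by rewrite ?size_belast).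
- by rewrite !size_rcons in hs.
- case: (eqVneq (last (xx p) w0) (last (xx q) w0')) => e.
    have [epq ew] := IH p q w0 w0' ltac:(rewrite !size_rcons in hs; lia) pq qN
       (ok_rcons okw) (ok_rcons okw') e.
    move: neq ey; rewrite epq ew !last_rcons => ne ea.
    by move: ne; rewrite ea !eqxx.
  apply: (construct pq qN okw okw' ey neq); rewrite !belast_rcons head_rev_cons /= => _ _.
  by rewrite eq_sym.
Qed.

Variable r : nat.
Hypothesis Ereg : forall u, #|[set v | E u v]| = r.

Definition labels := [seq (p, w) | p <- iota 0 N.+1, w <- nbw E (minn p (N - p)) None (xx p)].

Lemma labels_bound : \sum_(0 <= p < N.+1) GG r (minn p (N - p)) <= #|T|.
Proof.
have U : uniq labels.
  apply: allpairs_uniq_dep; first exact: iota_uniq.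
    by move=> p _; apply: nbw_uniq.
  by move=> [x1 y1] [x2 y2] _ _ /= [-> ->].
have okl : forall l, l \in labels -> l.1 <= N /\ ok l.1 l.2.
  move=> l /allpairsPdep[p [w [hp hw ->]]] /=.
  move: hp; rewrite mem_iota add0n => /= hp; split; first lia.
  by have [h1 h2 h3] := nbw_prop hw; apply/and3P.
have inj : {in labels &, injective (fun l => last (xx l.1) l.2)}.
  move=> [p w] [q w'] /okl /= [pN okp] /okl /= [qN okq] /= ey.
  case: (leqP p q) => h.
    by have [-> ->] := inj_main (leqnn _) h qN okp okq ey.
  by have [-> ->] := inj_main (leqnn _) (ltnW h) pN okq okp (esym ey).
have Um : uniq [seq last (xx l.1) l.2 | l <- labels] by rewrite map_inj_in_uniq.
have := max_card (mem [seq last (xx l.1) l.2 | l <- labels]).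
rewrite (card_uniqP Um) size_map /labels size_allpairs_dep.
rewrite (eq_map (fun p => nbw_size_none Esym Ereg _ (xx p))) sumnE big_map.
by [].
Qed.

End Main.

Theorem theorem2 (r g : nat) (hr : 1 <= r) (hg : 3 <= g)
  (T : finType) (E A : rel T) :
  is_mixed_cage 1 r g E A -> mixed_bound r g <= #|T|.
Proof.
move=> [[Esym [irrE irrA] hA hE [hcyc hgir]] _].
have [x0 _] : exists x0 : T, True by case: hcyc => x _; exists x.
have hA1 : forall u, A u (out A u).
  move=> u; have /set0Pn[v] : [set v | A u v] != set0 by rewrite -cards_eq0 (hA u).1.
  rewrite inE => Av; rewrite /out; case: pickP => [w Aw|H] //=.
  by have := H v; rewrite Av.
have := @labels_bound T E A g x0 Esym hA1 hg hgir r hE.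
by rewrite /N bound_eq.
Qed.
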